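(* In an operational theory, let $\mathcal{M}_1,\mathcal{M}_2,\mathcal{M}_3$ be binary-outcome measurements (outcomes $X_i\in\{0,1\}$) that are pairwise jointly measurable, with joint measurements $\mathcal{M}_{ij}$ ($i<j$), and suppose there is a preparation $\mathcal{P}_*$ such that for all $i\neq j$, $p(X_i=0,X_j=1|\mathcal{M}_{ij};\mathcal{P}_* )=p(X_i=1,X_j=0|\mathcal{M}_{ij};\mathcal{P}_* )=\tfrac12$. Then $\mathcal{M}_1,\mathcal{M}_2,\mathcal{M}_3$ are not (triplewise) jointly measurable.
   Context: An operational theory assigns outcome probabilities $p(X|M;P)$ to preparation and measurement procedures; measurements $\mathcal{M}$ are equivalence classes of measurement procedures giving identical statistics for all preparations. A set of measurements $\{\mathcal{M}_1,\dots,\mathcal{M}_N\}$ is jointly measurable if there exists a measurement $\mathcal{M}$ whose outcome set is the Cartesian product of the outcome sets of the $\mathcal{M}_k$ and such that, for every preparation and every subset $S$ of the indices, the outcome distribution of the joint measurement of $\{\mathcal{M}_s:s\in S\}$ (in particular of each single $\mathcal{M}_s$) is the corresponding marginal of the outcome distribution of $\mathcal{M}$. A set is pairwise jointly measurable if every two-element subset is jointly measurable. *)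

(* Defs.v *)
From mathcomp Require Import all_boot all_order all_algebra.
Set Implicit Arguments. Unset Strict Implicit. Unset Printing Implicit Defensive.
Import Order.TTheory GRing.Theory Num.Theory.
Local Open Scope ring_scope.

(* Measurements are identified
   with their statistics (equivalence classes of procedures); all notions below
   only depend on the statistics. *)
Record opTheory (R : realFieldType) := OpTheory {
  Prep : Type;
  Meas : finType -> Type;
  prob : forall O : finType, Meas O -> Prep -> O -> R;
  prob_ge0 : forall O (M : Meas O) P x, 0 <= prob M P x;
  prob_sum1 : forall O (M : Meas O) P, \sum_(x : O) prob M P x = 1
}.

Arguments prob {R T O} M P x : rename.

Section JM.
Variables (R : realFieldType) (T : opTheory R).

Definition joint2 (M1 M2 : Meas T bool) (M12 : Meas T (bool * bool)%type) : Prop :=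
  forall P : Prep T,
    (forall x : bool, \sum_(y : bool) prob M12 P (x, y) = prob M1 P x) /\
    (forall y : bool, \sum_(x : bool) prob M12 P (x, y) = prob M2 P y).

Definition joint3 (M1 M2 M3 : Meas T bool)
    (M12 M13 M23 : Meas T (bool * bool)%type) : Prop :=
  exists M : Meas T (bool * bool * bool)%type, forall P : Prep T,
    (forall x : bool, \sum_(y : bool) \sum_(z : bool) prob M P (x, y, z) = prob M1 P x) /\
    (forall y : bool, \sum_(x : bool) \sum_(z : bool) prob M P (x, y, z) = prob M2 P y) /\
    (forall z : bool, \sum_(x : bool) \sum_(y : bool) prob M P (x, y, z) = prob M3 P z) /\
    (forall x y : bool, \sum_(z : bool) prob M P (x, y, z) = prob M12 P (x, y)) /\
    (forall x z : bool, \sum_(y : bool) prob M P (x, y, z) = prob M13 P (x, z)) /\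
    (forall y z : bool, \sum_(x : bool) prob M P (x, y, z) = prob M23 P (y, z)).

End JM.

(* Main.v *)
Require Import Defs.
From mathcomp Require Import all_boot all_order all_algebra.
From mathcomp Require Import lra.
Import Order.TTheory GRing.Theory Num.Theory.
Local Open Scope ring_scope.

Theorem corollary1 (R : realFieldType) (T : opTheory R)
    (M1 M2 M3 : Meas T bool) (M12 M13 M23 : Meas T (bool * bool)%type)
    (H12 : joint2 M1 M2 M12) (H13 : joint2 M1 M3 M13) (H23 : joint2 M2 M3 M23)
    (Pstar : Prep T)
    (h12 : prob M12 Pstar (false, true) = 1 / 2 /\ prob M12 Pstar (true, false) = 1 / 2)
    (h13 : prob M13 Pstar (false, true) = 1 / 2 /\ prob M13 Pstar (true, false) = 1 / 2)
    (h23 : prob M23 Pstar (false, true) = 1 / 2 /\ prob M23 Pstar (true, false) = 1 / 2) :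
  ~ joint3 M1 M2 M3 M12 M13 M23.
Proof.
move=> [M HM]; have [_ [_ [_ [e12 [e13 e23]]]]] := HM Pstar.
have S := prob_sum1 M Pstar.
have g := prob_ge0 M Pstar.
case: h12 => a1 a2; case: h13 => b1 b2; case: h23 => c1 c2.
move: (e12 false true) (e12 true false) (e13 false true) (e13 true false)
  (e23 false true) (e23 true false).
rewrite a1 a2 b1 b2 c1 c2 !big_bool /=.
have S' : \sum_(x : bool) \sum_(y : bool) \sum_(z : bool) prob M Pstar (x, y, z) = 1.
  rewrite -S pair_big /= pair_big /=.
  by apply: eq_bigr => -[[]].
move: S'; rewrite !big_bool /= => S'.
have := g (true,true,true); have := g (true,true,false); have := g (true,false,true);
have := g (true,false,false); have := g (false,true,true); have := g (false,true,false);
have := g (false,false,true); have := g (false,false,false).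
lra.
Qed.
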